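(* Let $\Theta\subset\mathbb{R}^d$ be open and bounded, let $(X_{\mathcal D},\Pi_{\mathcal D},\nabla_{\mathcal D})$ be a gradient discretisation with piecewise constant reconstruction as described in the context, let $\delta t>0$, and let $\zeta:\mathbb{R}\to\mathbb{R}$ be non-decreasing and Lipschitz continuous with $\zeta(0)=0$ and $0\le\zeta'\le L_\zeta$ a.e. Let $L\ge L_\zeta/2$ and let $r\in L^2(\Theta)$ be a fixed function (in the scheme, $r=\Pi_{\mathcal D}u^{n-1}+f(\zeta(\Pi_{\mathcal D}u^{n-1}))\Delta^nW$ for a fixed realisation). Suppose $u^n\in X_{\mathcal D}$ satisfies $$\langle \Pi_{\mathcal D}u^n,\Pi_{\mathcal D}\varphi\rangle+\delta t\,\langle\nabla_{\mathcal D}\zeta(u^n),\nabla_{\mathcal D}\varphi\rangle=\langle r,\Pi_{\mathcal D}\varphi\rangle\quad\forall\varphi\in X_{\mathcal D}.$$ Let $u^{n,0}\in X_{\mathcal D}$ be arbitrary and define $(u^{n,i})_{i\ge1}\subset X_{\mathcal D}$ by: $u^{n,i}$ is the solution of $$\langle \Pi_{\mathcal D}u^{n,i},\Pi_{\mathcal D}\varphi\rangle+\delta t\,L\,\langle\nabla_{\mathcal D}u^{n,i},\nabla_{\mathcal D}\varphi\rangle=\delta t\,\langle L\nabla_{\mathcal D}u^{n,i-1}-\nabla_{\mathcal D}\zeta(u^{n,i-1}),\nabla_{\mathcal D}\varphi\rangle+\langle r,\Pi_{\mathcal D}\varphi\rangle\quad\forall\varphi\in X_{\mathcal D}.$$ Then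 $\|\Pi_{\mathcal D}u^{n,i}-\Pi_{\mathcal D}u^n\|_{*,\mathcal D}\to0$ as $i\to\infty$.
   Context: A gradient discretisation with piecewise constant reconstruction consists of: a finite-dimensional real vector space $X_{\mathcal D}$ with basis $(\mathbf e_j)_{j\in B}$ ($B$ a finite index set); a family of disjoint measurable subsets $(\Theta_j)_{j\in B}$ of $\Theta$ and the linear map $\Pi_{\mathcal D}:X_{\mathcal D}\to L^\infty(\Theta)$, $\Pi_{\mathcal D}v=\sum_{j\in B}v_j\mathbf 1_{\Theta_j}$ for $v=\sum_j v_j\mathbf e_j$; and a linear map $\nabla_{\mathcal D}:X_{\mathcal D}\to L^2(\Theta)^d$ such that $v\mapsto\|\nabla_{\mathcal D}v\|_{L^2(\Theta)}$ is a norm on $X_{\mathcal D}$. For $g:\mathbb{R}\to\mathbb{R}$ with $g(0)=0$ and $v=(v_j)_{j\in B}\in X_{\mathcal D}$, set $g(v):=(g(v_j))_{j\in B}\in X_{\mathcal D}$; then $\Pi_{\mathcal D}g(v)=g(\Pi_{\mathcal D}v)$. $\langle\cdot,\cdot\rangle$ denotes the $L^2(\Theta)$ (or $L^2(\Theta)^d$) inner product and $\|\cdot\|$ its norm. The discrete dual norm on $\Pi_{\mathcal D}(X_{\mathcal D})$ is $\|v\|_{*,\mathcal D}:=\sup\{\int_\Theta v\,\Pi_{\mathcal D}w\,dx: w\in X_{\mathcal D},\ \|\nabla_{\mathcal D}w\|=1\}$. *)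

(* Defs.v *)
From HB Require Import structures.
From mathcomp Require Import all_boot all_order all_algebra.
From mathcomp Require Import all_classical all_reals all_analysis.
Set Implicit Arguments. Unset Strict Implicit. Unset Printing Implicit Defensive.
Import Order.TTheory GRing.Theory Num.Theory.
Import numFieldNormedType.Exports.
Local Open Scope classical_set_scope.
Local Open Scope ring_scope.

Definition Rd (R : realType) (d : nat) : measurableType _ :=
  g_sigma_algebraType (@open 'rV[R]_d).

Definition box (R : realType) (d : nat) (a b : 'rV[R]_d) : set (Rd R d) :=
  [set x : 'rV[R]_d | forall i, a 0 i <= x 0 i <= b 0 i].

(* mu is the d-dimensional Lebesgue measure (on Borel sets): the (unique)
   Borel measure giving every closed box its volume. *)
Definition is_lebesgue (R : realType) (d : nat)
    (mu : {measure set Rd R d -> \bar R}) : Prop :=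
  forall a b : 'rV[R]_d, (forall i, a 0 i <= b 0 i) ->
    mu (box a b) = (\prod_(i < d) (b 0 i - a 0 i))%:E.

Section GD.
Variables (R : realType) (d : nat) (mu : {measure set Rd R d -> \bar R})
  (Theta : set (Rd R d)).

Definition L2 (f : Rd R d -> R) : Prop :=
  measurable_fun Theta f /\ mu.-integrable Theta (fun x => (f x ^+ 2)%:E).

Definition L2vec (F : Rd R d -> 'rV[R]_d) : Prop :=
  forall i, L2 (fun x => F x 0 i).

Definition ip (f g : Rd R d -> R) : R := \int[mu]_(x in Theta) (f x * g x).
Definition ipvec (F G : Rd R d -> 'rV[R]_d) : R :=
  \int[mu]_(x in Theta) (\sum_(i < d) F x 0 i * G x 0 i).
Definition normvec (F : Rd R d -> 'rV[R]_d) : R := Num.sqrt (ipvec F F).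

Variables (B : finType) (ThetaB : B -> set (Rd R d))
  (gradB : B -> Rd R d -> 'rV[R]_d).

(* X_D = functions B -> R (coordinates in the basis (e_j)_{j in B}) *)
Definition PiD (v : B -> R) : Rd R d -> R :=
  fun x => \sum_(j : B) v j * \1_(ThetaB j) x.

(* nabla_D: the linear map determined by the images gradB j of the basis *)
Definition gradD (v : B -> R) : Rd R d -> 'rV[R]_d :=
  fun x => \sum_(j : B) v j *: gradB j x.

Definition mapX (g : R -> R) (v : B -> R) : B -> R := fun j => g (v j).

Definition dual_normD (v : Rd R d -> R) : R :=
  sup [set ip v (PiD w) | w in [set w : B -> R | normvec (gradD w) = 1]].

End GD.

(* Main.v *)
Require Import Defs.
From HB Require Import structures.
From mathcomp Require Import all_boot all_order all_algebra.
From mathcomp Require Import all_classical all_reals all_analysis.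
From mathcomp Require Import measurable_realfun.
From mathcomp Require Import ring lra.
Set Implicit Arguments. Unset Strict Implicit. Unset Printing Implicit Defensive.
Import Order.TTheory GRing.Theory Num.Theory.
Import numFieldNormedType.Exports.
Local Open Scope classical_set_scope.
Local Open Scope ring_scope.

Section Meas.
Variables (R : realType) (d : nat).

Lemma open_measRd (A : set (Rd R d)) : open (A : set 'rV[R]_d) -> measurable A.
Proof. move=> oA; exact: sub_sigma_algebra. Qed.

Lemma closed_measRd (A : set (Rd R d)) : closed (A : set 'rV[R]_d) -> measurable A.
Proof.
move=> cA; rewrite -(setCK A); apply: measurableC; apply: open_measRd.
exact: closed_openC.
Qed.

Lemma box_closed (a b : 'rV[R]_d) : closed (box a b : set 'rV[R]_d).
Proof.
have -> : (box a b : set 'rV[R]_d) = \bigcap_(i in [set: 'I_d])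
   ((fun M : 'rV[R]_d => M 0 i) @^-1` [set y | a 0 i <= y] `&`
    (fun M : 'rV[R]_d => M 0 i) @^-1` [set y | y <= b 0 i]).
  apply/seteqP; split => x /=.
    by move=> H i _; have /andP[] := H i.
  by move=> H i; have [] := H i I; move=> /= -> ->.
apply: closed_bigI => i _; apply: closedI; apply: preimage_closed.
- by move=> ? _; exact: coord_continuous.
- exact: closed_ge.
- by move=> ? _; exact: coord_continuous.
- exact: closed_le.
Qed.
End Meas.
Lemma coord_le_norm (R : realType) d (v : 'rV[R]_d) i : `|v 0 i| <= `|v|.
Proof.
have /mapP[j Hj ->] : `|v 0 i| \in [seq `|v x.1 x.2| | x : 'I_1 * 'I_d].
  by apply/mapP; exists (0, i) => //=; rewrite mem_enum.
by rewrite [leRHS]/Num.norm /= mx_normrE; apply/bigmax_geP; right => /=; exists j.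
Qed.

Lemma bounded_mu_fin (R : realType) d (mu : {measure set Rd R d -> \bar R})
  (Theta : set (Rd R d)) : is_lebesgue mu -> measurable Theta ->
  bounded_set (Theta : set 'rV[R]_d) -> (mu Theta < +oo)%E.
Proof.
move=> leb mT [M [Mreal normAltM]].
set c : R := `|M| + 1.
have c0 : 0 <= c by rewrite /c addr_ge0.
have Mc : M < c by rewrite /c (le_lt_trans (real_ler_norm Mreal)) // ltrDl.
pose a : 'rV[R]_d := const_mx (- c). pose b : 'rV[R]_d := const_mx c.
have sub : Theta `<=` box a b.
  move=> v /(normAltM c Mc) /= H i.
  by rewrite !mxE -ler_norml (le_trans (coord_le_norm v i)).
apply: (le_lt_trans (le_measure _ _ _ sub)).
- by rewrite inE.
- by rewrite inE; apply: closed_measRd; exact: box_closed.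
have E : mu (box a b) = (\prod_(i < d) (b 0 i - a 0 i))%:E.
  by apply: leb => i; rewrite !mxE (le_trans _ c0) // oppr_le0.
have E' : (mu (box a b) < +oo)%E by rewrite E ltry.
exact: E'.
Qed.
Section Integ.
Context dd (T : measurableType dd) (R : realType) (mu : {measure set T -> \bar R}).
Variables (D : set T) (mD : measurable D).

Definition Rint (f : T -> R) := mu.-integrable D (EFin \o f).

Lemma Rint_sum I (s : seq I) (h : I -> T -> R) :
  (forall i, Rint (h i)) ->
  Rint (fun x => \sum_(i <- s) h i x) /\
  \int[mu]_(x in D) (\sum_(i <- s) h i x) = \sum_(i <- s) \int[mu]_(x in D) h i x.
Proof.
move=> hi; elim: s => [|i s [ih1 ih2]].
  split.
    by apply: (eq_integrable mD (cst 0%E)) => [x _|]; rewrite /= ?big_nil //; exact: integrable0.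
  rewrite big_nil; under eq_Rintegral do rewrite big_nil.
  by rewrite Rintegral_cst // mul0r.
split.
  apply: (eq_integrable mD ((EFin \o h i) \+ (EFin \o fun x => \sum_(i <- s) h i x))).
    by move=> x _; rewrite /= big_cons.
  exact: (integrableD mD (hi i) ih1).
rewrite big_cons -ih2 -RintegralD //.
  by apply: eq_Rintegral => x _; rewrite big_cons.
exact: hi.
Qed.

Lemma RintZ (f : T -> R) c : Rint f -> Rint (fun x => c * f x).
Proof.
move=> hf; rewrite /Rint; apply: (eq_integrable mD (fun x => (c%:E * (EFin \o f) x)%E)).
  by move=> x _.
exact: integrableZl.
Qed.

Lemma Rint_prod (f g : T -> R) :
  measurable_fun D f -> mu.-integrable D (fun x => (f x ^+ 2)%:E) ->
  measurable_fun D g -> mu.-integrable D (fun x => (g x ^+ 2)%:E) ->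
  Rint (fun x => f x * g x).
Proof.
move=> mf if2 mg ig2.
apply: (le_integrable mD _ _ (integrableD mD if2 ig2)).
  by apply/measurable_EFinP; exact: measurable_funM.
move=> x _ /=; rewrite lee_fin.
rewrite normrM [X in _ <= X]ger0_norm ?addr_ge0 ?sqr_ge0 //.
have := sqr_ge0 (`|f x| - `|g x|).
rewrite sqrrB !real_normK ?num_real // => H.
nra.
Qed.

End Integ.

Section GDL.
Variables (R : realType) (d : nat) (mu : {measure set Rd R d -> \bar R})
  (Theta : set (Rd R d)) (B : finType) (ThetaB : B -> set (Rd R d))
  (gradB : B -> Rd R d -> 'rV[R]_d).
Hypothesis mT : measurable Theta.
Hypothesis mB : forall j, measurable (ThetaB j).
Hypothesis subB : forall j, ThetaB j `<=` Theta.
Hypothesis disjB : forall j k, j != k -> ThetaB j `&` ThetaB k = set0.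
Hypothesis finB : forall j, (mu (ThetaB j) < +oo)%E.
Hypothesis gL2 : forall j, L2vec mu Theta (gradB j).

Definition mass j := \int[mu]_(x in Theta) \1_(ThetaB j) x.
Definition Agr j k := ipvec mu Theta (gradB j) (gradB k).
Definition mBf (v w : B -> R) := \sum_(j : B) v j * w j * mass j.
Definition aBf (v w : B -> R) := \sum_(j : B) \sum_(k : B) v j * w k * Agr j k.

Lemma ind_int j : Rint mu Theta (\1_(ThetaB j)).
Proof.
apply/integrableP; split.
  by apply/measurable_EFinP; exact: measurable_indic.
rewrite (_ : (fun x => _) = fun x => (\1_(ThetaB j) x)%:E); last first.
  by apply/funext => x; rewrite /= ger0_norm.
rewrite integral_indic //; apply: le_lt_trans (finB j).
by apply: le_measure; rewrite ?inE //; exact: measurableI.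
Qed.

Lemma mass_ge0 j : 0 <= mass j.
Proof. by apply: Rintegral_ge0 => x _. Qed.

Lemma PiD_mul v w x : PiD ThetaB v x * PiD ThetaB w x =
  \sum_(j : B) (v j * w j) * \1_(ThetaB j) x.
Proof.
rewrite /PiD mulr_suml; apply: eq_bigr => j _.
rewrite mulr_sumr (bigD1 j) //= big1 ?addr0.
  rewrite !indicE; case: (x \in ThetaB j); rewrite ?mulr0 ?mul0r ?mulr1 //.
move=> k kj; rewrite !indicE.
case Hj: (x \in ThetaB j); case Hk: (x \in ThetaB k); rewrite ?mulr0 ?mul0r //.
exfalso; have E := disjB kj.
have : (ThetaB k `&` ThetaB j) x by split; apply/set_mem; [rewrite Hk | rewrite Hj].
by rewrite E.
Qed.


Lemma ip_PiD v w : ip mu Theta (PiD ThetaB v) (PiD ThetaB w) = mBf v w.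
Proof.
rewrite /ip; under eq_Rintegral do rewrite PiD_mul.
have [_ ->] := @Rint_sum _ _ _ _ _ mT _ (index_enum B) (fun j x => (v j * w j) * \1_(ThetaB j) x)
   (fun j => RintZ mT (v j * w j) (ind_int j)).
apply: eq_bigr => j _; rewrite RintegralZl //; exact: ind_int.
Qed.

Definition hG j k x := \sum_(i < d) gradB j x 0 i * gradB k x 0 i.

Lemma hG_int j k : Rint mu Theta (hG j k).
Proof.
have hi : forall i, Rint mu Theta (fun x => gradB j x 0 i * gradB k x 0 i).
  move=> i; have [mj ij] := gL2 j i; have [mk ik] := gL2 k i.
  exact: Rint_prod.
by have [] := @Rint_sum _ _ _ _ _ mT _ (index_enum 'I_d) _ hi.
Qed.

Lemma gradD_entry v x i : gradD gradB v x 0 i = \sum_(j : B) v j * gradB j x 0 i.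
Proof. by rewrite /gradD summxE; apply: eq_bigr => j _; rewrite mxE. Qed.

Lemma gradD_mul v w x : \sum_(i < d) gradD gradB v x 0 i * gradD gradB w x 0 i =
  \sum_(j : B) \sum_(k : B) v j * w k * hG j k x.
Proof.
under eq_bigr do rewrite !gradD_entry big_distrl /=.
under eq_bigr do under eq_bigr do rewrite big_distrr /=.
rewrite exchange_big /=; apply: eq_bigr => j _.
rewrite exchange_big /=; apply: eq_bigr => k _.
rewrite /hG big_distrr /=; apply: eq_bigr => i _.
by rewrite mulrACA.
Qed.

Lemma ipvec_gradD v w : ipvec mu Theta (gradD gradB v) (gradD gradB w) = aBf v w.
Proof.
rewrite /ipvec; under eq_Rintegral do rewrite gradD_mul.
have inner j : Rint mu Theta (fun x => \sum_(k : B) v j * w k * hG j k x).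
  have [+ _] := @Rint_sum _ _ _ _ _ mT _ (index_enum B)
    (fun k x => v j * w k * hG j k x) (fun k => RintZ mT (v j * w k) (hG_int j k)).
  by [].
have [_ ->] := @Rint_sum _ _ _ _ _ mT _ (index_enum B) _ inner.
apply: eq_bigr => j _.
have [_ ->] := @Rint_sum _ _ _ _ _ mT _ (index_enum B)
    (fun k x => v j * w k * hG j k x) (fun k => RintZ mT (v j * w k) (hG_int j k)).
apply: eq_bigr => k _; rewrite RintegralZl //; last exact: hG_int.
Qed.

Lemma Agr_sym j k : Agr j k = Agr k j.
Proof. by rewrite /Agr /ipvec; apply: eq_Rintegral => x _; apply: eq_bigr => i _; rewrite mulrC. Qed.

Lemma aBf_sym v w : aBf v w = aBf w v.
Proof.
rewrite /aBf exchange_big /=; apply: eq_bigr => j _; apply: eq_bigr => k _.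
by rewrite Agr_sym; ring.
Qed.

Lemma aBf_ge0 v : 0 <= aBf v v.
Proof.
rewrite -ipvec_gradD /ipvec; apply: Rintegral_ge0 => x _.
by apply: sumr_ge0 => i _; rewrite -expr2 sqr_ge0.
Qed.

Lemma aBf_expand x y c : aBf (fun j => x j - c * y j) (fun j => x j - c * y j) =
  aBf x x - c * aBf x y - c * aBf y x + c ^+ 2 * aBf y y.
Proof.
rewrite /aBf !mulr_sumr -!sumrB -!big_split /=; apply: eq_bigr => j _.
rewrite !mulr_sumr -!sumrB -!big_split /=; apply: eq_bigr => k _.
ring.
Qed.

Lemma aBf_lin1 (L : R) v1 v2 v3 v4 w :
  aBf (fun j => L * (v1 j - v2 j) + (v3 j - v4 j)) w =
  L * (aBf v1 w - aBf v2 w) + (aBf v3 w - aBf v4 w).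
Proof.
rewrite /aBf -!sumrB !mulr_sumr -!big_split /=; apply: eq_bigr => j _.
rewrite -!sumrB !mulr_sumr -!big_split /=; apply: eq_bigr => k _.
ring.
Qed.

Lemma aBf_lin2 (L : R) v z w :
  aBf (fun j => L * v j - z j) w = L * aBf v w - aBf z w.
Proof.
rewrite /aBf mulr_sumr -!sumrB; apply: eq_bigr => j _.
rewrite mulr_sumr -!sumrB; apply: eq_bigr => k _.
ring.
Qed.

Lemma mBf_sub x y w : mBf (fun j => x j - y j) w = mBf x w - mBf y w.
Proof. by rewrite /mBf -sumrB; apply: eq_bigr => j _; ring. Qed.

Lemma aBf_CS g w : aBf w w = 1 -> aBf g w ^+ 2 <= aBf g g.
Proof.
move=> w1; have := aBf_ge0 (fun j => g j - aBf g w * w j).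
rewrite aBf_expand w1 (aBf_sym w g) mulr1 => H.
by rewrite -subr_ge0; apply: le_trans H _; rewrite le_eqVlt; apply/orP; left; apply/eqP; ring.
Qed.

End GDL.

Lemma seq_to0 (R : realType) (q T : nat -> R) (dt : R) : 0 < dt ->
  (forall i, 0 <= q i) -> (forall i, 0 <= T i) ->
  (forall i, dt * q i <= T i - T i.+1) -> q @ \oo --> 0.
Proof.
move=> dt0 q0 T0 H.
have Tni : nonincreasing_seq T.
  apply/nonincreasing_seqP => n; have := H n; have := q0 n.
  move=> a b; rewrite -subr_ge0; apply: le_trans b; exact: mulr_ge0 (ltW dt0) a.
have cT : cvgn T.
  apply: nonincreasing_is_cvgn Tni _; exists 0 => _ [n _ <-]; exact: T0.
have h2 : (fun i => T i.+1) @ \oo --> limn T by rewrite cvg_shiftS.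
have dT : (fun i => T i - T i.+1) @ \oo --> 0.
  rewrite -(subrr (limn T)); apply: cvgB => //.
have dT' : (fun i => dt^-1 * (T i - T i.+1)) @ \oo --> 0.
  rewrite -(mulr0 dt^-1); apply: cvgM => //; exact: cvg_cst.
apply: (squeeze_cvgr _ (cvg_cst 0) dT'); near=> i; rewrite q0 /=.
rewrite -(ler_pM2l dt0) mulrA mulrV ?unitf_gt0 // mul1r; exact: H.
Unshelve. all: by end_near.
Qed.

Lemma sqrt_to0 (R : realType) (q : nat -> R) (c : R) : q @ \oo --> 0 ->
  (fun i => c * Num.sqrt (q i)) @ \oo --> 0.
Proof.
move=> hq; rewrite -(mulr0 c) -sqrtr0; apply: cvgM; first exact: cvg_cst.
exact: (continuous_cvg _ (@sqrt_continuous R 0) hq).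
Qed.

Lemma sup_abs_le (R : realType) (E : set R) b : 0 <= b ->
  (forall y, E y -> `|y| <= b) -> `|sup E| <= b.
Proof.
move=> b0 H; have [[y Ey]|E0] := pselect (E !=set0).
  have ubE : has_ubound E by exists b => z /H; rewrite ler_norml => /andP[].
  rewrite ler_norml; apply/andP; split.
    apply: le_trans (ub_le_sup ubE Ey); have := H y Ey; rewrite ler_norml => /andP[].
    by [].
  by apply: ge_sup; [exists y | move=> z /H; rewrite ler_norml => /andP[]].
have -> : E = set0 by apply/seteqP; split => // z Ez; apply: E0; exists z.
by rewrite sup0 normr0.
Qed.

Lemma comp_ineq (R : realType) (L Lz e w dd : R) : 0 <= Lz -> Lz / 2 <= L ->
  0 <= w * e -> `|w| <= Lz * `|e| ->
  0 <= (e + dd) * (L * dd + w) - L / 2 * (e + dd) ^+ 2 + L / 2 * e ^+ 2.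
Proof.
move=> Lz0 LzL we wle.
have w2 : w ^+ 2 <= Lz * (w * e).
  rewrite -[w ^+ 2]real_normK ?num_real // -[w * e]ger0_norm // normrM.
  have := normr_ge0 w; have := normr_ge0 e; nra.
have w2' : w ^+ 2 <= 2 * L * (w * e).
  apply: le_trans w2 _; apply: ler_wpM2r => //; lra.
have L0 : 0 <= L by lra.
have -> : (e + dd) * (L * dd + w) - L / 2 * (e + dd) ^+ 2 + L / 2 * e ^+ 2 =
  L / 2 * dd ^+ 2 + w * e + w * dd by field.
have [Lp|] := ltrP 0 L.
  have H : 0 <= (2 * L) * (L / 2 * dd ^+ 2 + w * e + w * dd).
    have := sqr_ge0 (L * dd + w).
    have -> : 2 * L * (L / 2 * dd ^+ 2 + w * e + w * dd) =
      (L * dd + w) ^+ 2 + (2 * L * (w * e) - w ^+ 2) by field.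
    move=> h; apply: addr_ge0 => //; lra.
  by rewrite pmulr_rge0 // in H; rewrite mulr_gt0.
move=> Lle; have L00 : L = 0 by apply/eqP; rewrite eq_le Lle L0.
rewrite L00 mulr0 mul0r in w2'.
have w0 : w = 0 by apply/eqP; rewrite -sqrf_eq0 eq_le w2' sqr_ge0.
by rewrite w0 L00 !mul0r !add0r.
Qed.

Unset Implicit Arguments.

Theorem mainTheorem1 (R : realType) (d : nat)
  (mu : {measure set Rd R d -> \bar R}) (Theta : set (Rd R d))
  (B : finType) (ThetaB : B -> set (Rd R d))
  (gradB : B -> Rd R d -> 'rV[R]_d)
  (dt : R) (zeta : R -> R) (Lz L : R) (r : Rd R d -> R)
  (un : B -> R) (u : nat -> B -> R) :
  is_lebesgue mu ->
  open (Theta : set 'rV[R]_d) -> bounded_set (Theta : set 'rV[R]_d) ->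
  (* gradient discretisation with piecewise constant reconstruction *)
  (forall j, measurable (ThetaB j)) ->
  (forall j, ThetaB j `<=` Theta) ->
  (forall j k, j != k -> ThetaB j `&` ThetaB k = set0) ->
  (forall j, L2vec mu Theta (gradB j)) ->
  (forall v : B -> R, normvec mu Theta (gradD gradB v) = 0 -> v = (fun _ => 0)) ->
  (* time step and nonlinearity *)
  0 < dt ->
  {homo zeta : x y / x <= y} ->
  zeta 0 = 0 ->
  0 <= Lz ->
  (forall x y, `|zeta x - zeta y| <= Lz * `|x - y|) ->
  Lz / 2 <= L ->
  L2 mu Theta r ->
  (* u^n solves the nonlinear scheme *)
  (forall phi : B -> R,
     ip mu Theta (PiD ThetaB un) (PiD ThetaB phi)
     + dt * ipvec mu Theta (gradD gradB (mapX zeta un)) (gradD gradB phi)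
     = ip mu Theta r (PiD ThetaB phi)) ->
  (* the linearised iteration *)
  (forall (i : nat) (phi : B -> R),
     ip mu Theta (PiD ThetaB (u i.+1)) (PiD ThetaB phi)
     + dt * L * ipvec mu Theta (gradD gradB (u i.+1)) (gradD gradB phi)
     = dt * ipvec mu Theta
              (fun x => L *: gradD gradB (u i) x
                        - gradD gradB (mapX zeta (u i)) x)
              (gradD gradB phi)
       + ip mu Theta r (PiD ThetaB phi)) ->
  (fun i => dual_normD mu Theta ThetaB gradB
              (fun x => PiD ThetaB (u i) x - PiD ThetaB un x)) @ \oo --> 0.
Proof.
move=> leb oT bT mBj subB disjB gL2 nd dt0 homo z0 Lz0 lip LzL r2 Hun Hit.
have mT : measurable Theta := open_measRd oT.
have fT := bounded_mu_fin leb mT bT.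
have finB j : (mu (ThetaB j) < +oo)%E.
  by apply: le_lt_trans fT; apply: le_measure; rewrite ?inE.
have ipP := ip_PiD mT mBj disjB finB.
have ipG := ipvec_gradD mT gL2.
have Egr v : (fun x => L *: gradD gradB v x - gradD gradB (mapX zeta v) x) =
    gradD gradB (fun j => L * v j - mapX zeta v j).
  apply/funext => x; rewrite /gradD scaler_sumr -sumrB; apply: eq_bigr => j _.
  by rewrite scalerA scalerBl.
pose e i := fun j => u i j - un j.
pose g i := fun j => L * (u i.+1 j - u i j) + (mapX zeta (u i) j - mapX zeta un j).
have L0 : 0 <= L by lra.
have key1 i phi : mBf mu Theta ThetaB (e i.+1) phi =
    - dt * aBf mu Theta gradB (g i) phi.
  have h1 := Hun phi; have h2 := Hit i phi.
  rewrite !ipP ipG in h1; rewrite Egr !ipP !ipG aBf_lin2 in h2.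
  rewrite /e mBf_sub /g aBf_lin1.
  lra.
have key2 i : L / 2 * (mBf mu Theta ThetaB (e i.+1) (e i.+1)
      - mBf mu Theta ThetaB (e i) (e i)) <= mBf mu Theta ThetaB (e i.+1) (g i).
  rewrite -subr_ge0 /mBf -sumrB mulr_sumr -sumrB; apply: sumr_ge0 => j _.
  have m0 := mass_ge0 mu Theta ThetaB j.
  have H := comp_ineq (e := u i j - un j) (w := zeta (u i j) - zeta (un j))
     (u i.+1 j - u i j) Lz0 LzL.
  have we : 0 <= (zeta (u i j) - zeta (un j)) * (u i j - un j).
    have [le|le] := leP (u i j) (un j).
      by apply: mulr_le0; rewrite subr_le0 //; exact: (homo _ _ le).
    by apply: mulr_ge0; rewrite subr_ge0 //; [exact: (homo _ _ (ltW le)) | exact: ltW].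
  have := H we (lip _ _) => {}H.
  rewrite /e /g /mapX.
  nra.
pose q i := aBf mu Theta gradB (g i) (g i).
pose S i := L / 2 * mBf mu Theta ThetaB (e i) (e i).
have q0 i : 0 <= q i by exact: aBf_ge0.
have S0 i : 0 <= S i.
  apply: mulr_ge0; first lra.
  by apply: sumr_ge0 => j _; apply: mulr_ge0; [rewrite -expr2 sqr_ge0|exact: mass_ge0].
have key3 i : dt * q i <= S i - S i.+1.
  have := key2 i; rewrite (key1 i (g i)) /q /S mulrBr; lra.
have qto0 : q @ \oo --> 0 := seq_to0 dt0 q0 S0 key3.
have bto0 := sqrt_to0 dt qto0.
have bnd i : `|dual_normD mu Theta ThetaB gradB
      (fun x => PiD ThetaB (u i.+1) x - PiD ThetaB un x)| <= dt * Num.sqrt (q i).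
  rewrite /dual_normD; apply: sup_abs_le.
    by apply: mulr_ge0; [exact: ltW | exact: sqrtr_ge0].
  move=> y [w /= w1 <-].
  have -> : (fun x => PiD ThetaB (u i.+1) x - PiD ThetaB un x) = PiD ThetaB (e i.+1).
    by apply/funext => x; rewrite /PiD -sumrB; apply: eq_bigr => j _; rewrite mulrBl.
  rewrite ipP key1 normrM normrN (gtr0_norm dt0) ler_pM2l //.
  have ww : aBf mu Theta gradB w w = 1.
    rewrite /normvec ipG in w1.
    by rewrite -(sqr_sqrtr (aBf_ge0 mT gL2 w)) w1 expr1n.
  by rewrite -sqrtr_sqr; apply: ler_wsqrtr; exact: aBf_CS.
rewrite -cvg_shiftS /=.
apply: (@squeeze_cvgr _ _ _ _ (fun i => - (dt * Num.sqrt (q i)))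
   (fun i => dt * Num.sqrt (q i))).
- by near=> i; have := bnd i; rewrite ler_norml.
- by rewrite -oppr0; apply: cvgN; exact: bto0.
- exact: bto0.
Unshelve. all: by end_near.
Qed.
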